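(* Let $p$ be a prime and let $\rho\in[2,p-1]$. Then $$t_\rho(\mathbb{Z}_p)=s_\rho(\mathbb{Z}_p)=\left\lfloor\frac{p-2}{\rho-1}\right\rfloor+1.$$
   Context: Groups are written additively; $\mathbb{Z}_p=\mathbb{Z}/p\mathbb{Z}$. For $A\subseteq G$ let $A_0:=A\cup\{0\}$ and $\langle A\rangle^+_\rho:=\rho A_0=\{a_1+\dots+a_\rho:a_i\in A_0\}$. $\operatorname{diam}^+_A(G):=\min\{\rho\in\mathbb{N}_0:\langle A\rangle^+_\rho=G\}$ ($\min\varnothing=\infty$). The period of $S\subseteq G$ is $\pi(S):=\{g\in G:S+g=S\}$; $S$ is aperiodic if $\pi(S)=\{0\}$. A subset $A\subseteq G$ is $\rho$-maximal if it is maximal under inclusion subject to $\operatorname{diam}^+_A(G)\ge\rho$, i.e. subject to $\langle A\rangle^+_{\rho-1}\neq G$. With the convention $\max\varnothing=0$: $s_\rho(G):=\max\{|A|: A\subseteq G,\ \rho\le\operatorname{diam}^+_A(G)<\infty\}$ and $t_\rho(G):=\max\{|A|: A \text{ is an aperiodic } \rho\text{-maximal generating set for } G\}$. *)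

(* Defs.v *)
From HB Require Import structures.
From mathcomp Require Import all_boot all_order all_algebra.
Set Implicit Arguments. Unset Strict Implicit. Unset Printing Implicit Defensive.
Import GRing.Theory.
Local Open Scope ring_scope.

Section Defs.
Variable G : finZmodType.

Definition A0 (A : {set G}) : {set G} := 0 |: A.

(* <A>^+_rho := rho A_0 (with 0 A_0 = {0}) *)
Fixpoint sumset (rho : nat) (A : {set G}) : {set G} :=
  match rho with
  | O => [set 0]
  | S n => [set x + y | x in sumset n A, y in A0 A]
  end.

(* rho <= diam^+_A(G) : no smaller number of summands covers G *)
Definition diam_ge (A : {set G}) (rho : nat) : Prop :=
  forall n : nat, (n < rho)%N -> sumset n A <> [set: G].

(* diam^+_A(G) < infinity *)
Definition diam_finite (A : {set G}) : Prop :=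
  exists n : nat, sumset n A = [set: G].

Definition period (S : {set G}) : {set G} :=
  [set g | [set x + g | x in S] == S].

Definition aperiodic (S : {set G}) : Prop := period S = [set 0].

Definition generates (A : {set G}) : Prop :=
  forall H : {set G}, 0 \in H -> (forall x y, x \in H -> y \in H -> x - y \in H) ->
    A \subset H -> H = [set: G].

Definition rho_maximal (rho : nat) (A : {set G}) : Prop :=
  diam_ge A rho /\ forall B : {set G}, A \subset B -> diam_ge B rho -> B = A.

(* N is the maximum of |A| over A satisfying P, with max of empty = 0 *)
Definition is_max_card (P : {set G} -> Prop) (N : nat) : Prop :=
  ((exists A, P A /\ #|A| = N) \/ ((forall A, ~ P A) /\ N = 0%N)) /\
  (forall A, P A -> (#|A| <= N)%N).

Definition s_rho_is (rho N : nat) : Prop :=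
  is_max_card (fun A => diam_ge A rho /\ diam_finite A) N.

Definition t_rho_is (rho N : nat) : Prop :=
  is_max_card (fun A => aperiodic A /\ rho_maximal rho A /\ generates A) N.

End Defs.

Definition Zp_finZmod (p : nat) : finZmodType := 'Z_p.

(* Main.v *)
Require Import Defs.
From HB Require Import structures.
From mathcomp Require Import all_boot all_order all_algebra.
From Stdlib Require Import Lia.
Set Implicit Arguments. Unset Strict Implicit. Unset Printing Implicit Defensive.
Import GRing.Theory.
Local Open Scope ring_scope.
Section S.
Variable p : nat.
Hypothesis hp : prime p.
Local Notation G := (Zp_finZmod p).
Lemma valD (x y : G) : nat_of_ord (x + y) = (((x : nat) + y) %% p)%N.
Proof.
have p1 : (1 < p)%N by apply: prime_gt1.
rewrite /=; congr (_ %% _)%N; exact: Zp_cast.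
Qed.
Lemma valMn (x : G) n : nat_of_ord (x *+ n) = (((x : nat) * n) %% p)%N.
Proof.
have p1 : (1 < p)%N by apply: prime_gt1.
rewrite Zp_mulrn /=; congr (_ %% _)%N; exact: Zp_cast.
Qed.
Lemma cardG : #|[set: G]| = p.
Proof. by rewrite cardsT card_ord Zp_cast // prime_gt1. Qed.
Lemma ltG (x : G) : ((x : nat) < p)%N.
Proof.
have := valD x 0; rewrite addr0 /= addn0 => ->.
by rewrite ltn_pmod // prime_gt0.
Qed.
Lemma closed_full (S : {set G}) (x0 d : G) : x0 \in S -> d != 0 ->
  (forall x, x \in S -> x + d \in S) -> S = setT.
Proof.
move=> Sx0 d0 cl.
have p1 : (1 < p)%N by apply: prime_gt1.
have Sn : forall n, x0 + d *+ n \in S.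
  elim=> [|n IH]; first by rewrite mulr0n addr0.
  by rewrite mulrS addrCA addrC; apply: cl.
pose f := fun n : 'I_p => x0 + d *+ n.
have finj : injective f.
  move=> m n /addrI /(congr1 (@nat_of_ord _)); rewrite !valMn => e.
  have dpos : (0 < (d : nat))%N.
    by rewrite lt0n; apply: contra d0 => /eqP h; apply/eqP; apply: val_inj.
  have dlt : ((d : nat) < p)%N.
    exact: ltG.
  have key : forall a b : 'I_p, (a <= b)%N -> ((d * a) %% p = (d * b) %% p)%N -> a = b.
    move=> a b ab ee; apply/val_inj/eqP; rewrite /= eqn_leq ab /=.
    move/eqP: ee; rewrite eq_sym eqn_mod_dvd; last by rewrite leq_mul2l ab orbT.
    rewrite -mulnBr Euclid_dvdM // => /orP [] hd.
      by have := dvdn_leq dpos hd; rewrite leqNgt dlt.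
    rewrite leqNgt; apply/negP => ba.
    have := dvdn_leq _ hd; rewrite subn_gt0 ba => /(_ isT).
    by rewrite leqNgt (leq_ltn_trans (leq_subr _ _) (ltn_ord b)).
  case: (leqP m n) => mn; first by apply: key.
  by apply/esym/key; [exact: ltnW | ].
apply/eqP; rewrite eqEcard subsetT /=.
have <- : #|f @: [set: 'I_p]| = #|[set: G]|.
  by rewrite card_imset // !cardsT !card_ord Zp_cast.
apply: subset_leq_card; apply/subsetP => y /imsetP [n _ ->]; exact: Sn.
Qed.
Definition ss (X Y : {set G}) : {set G} := [set x + y | x in X, y in Y].

Lemma CD n (X Y : {set G}) : (#|Y| <= n)%N -> (exists x, x \in X) -> (exists y, y \in Y) ->
  (#|X| + #|Y| <= #|ss X Y| + 1)%N \/ ss X Y = setT.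
Proof.
elim: n X Y => [|n IH] X Y hY [x0 Xx0] [y0 Yy0].
  by move: hY; rewrite leqn0 cards_eq0 => /eqP Y0; rewrite Y0 inE in Yy0.
case: (leqP #|Y| 1) => hY1.
  left; apply: leq_add => //.
  have -> : #|X| = #|[set x + y0 | x in X]| by rewrite card_imset //; exact: addIr.
  apply: subset_leq_card; apply/subsetP => z /imsetP [x Xx ->].
  by apply/imset2P; exists x y0.
have [y1 [y2 [Yy1 Yy2 y12]]] := card_gt1P hY1.
have d0 : y2 - y1 != 0 by rewrite subr_eq0 eq_sym.
case: (boolP [forall x, [forall y, (x \in X) ==> (y \in Y) ==> (x + (y - y1) \in X)]]) => Hall.
  have XT : X = setT.
    apply: (closed_full Xx0 d0) => x Xx.
    by move/forallP: Hall => /(_ x) /forallP /(_ y2); rewrite Xx Yy2.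
  right; apply/eqP; rewrite eqEsubset subsetT /=; apply/subsetP => z _.
  apply/imset2P; exists (z - y1) y1; rewrite ?XT ?inE //.
  by rewrite subrK.
move/forallPn: Hall => [x /forallPn [y]].
rewrite !negb_imply => /andP [Xx /andP [Yy nX]].
pose c := x - y1.
pose T := [set v + c | v in Y].
pose X' := X :|: T.
pose Y' := [set v in Y | v + c \in X].
have ec : forall v, v + c = x + (v - y1).
  by move=> v; rewrite /c addrCA addrA.
have Y'Y : Y' \proper Y.
  rewrite properE; apply/andP; split.
    by apply/subsetP => v; rewrite inE => /andP [].
  apply/subsetPn; exists y => //; rewrite inE Yy ec /=; exact: nX.
have hY' : (#|Y'| <= n)%N.
  by rewrite -ltnS; apply: leq_trans (proper_card Y'Y) hY.
have Y'y1 : y1 \in Y' by rewrite inE Yy1 /= ec subrr addr0.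
have X'x : x \in X' by rewrite inE Xx.
have sub : ss X' Y' \subset ss X Y.
  apply/subsetP => z /imset2P [a b Xa Yb ->].
  move: Yb; rewrite inE => /andP [Yb Xb].
  move: Xa; rewrite inE => /orP [Xa|/imsetP [v Yv ->]].
    by apply/imset2P; exists a b.
  apply/imset2P; exists (b + c) v => //.
  by rewrite [LHS]addrC [LHS]addrCA [LHS]addrC.
have cardT : #|T| = #|Y| by rewrite card_imset //; exact: addIr.
have cardI : #|X :&: T| = #|Y'|.
  have -> : X :&: T = [set v + c | v in Y'].
    apply/setP => z; rewrite inE; apply/andP/imsetP.
      move=> [Xz /imsetP [v Yv ez]]; exists v => //; rewrite inE Yv -ez Xz //.
    move=> [v]; rewrite inE => /andP [Yv Xv] ->; split=> //.
    by apply/imsetP; exists v.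
  by rewrite card_imset //; exact: addIr.
have ecard : (#|X'| + #|Y'| = #|X| + #|Y|)%N.
  by rewrite -cardI -cardT cardsUI.
have [H|H] := IH X' Y' hY' (ex_intro _ x X'x) (ex_intro _ y1 Y'y1).
  left; rewrite -ecard; apply: (leq_trans H); rewrite leq_add2r.
  exact: subset_leq_card.
right; apply/eqP; rewrite eqEsubset subsetT /= -H; exact: sub.
Qed.
Lemma sumset0 n (A : {set G}) : 0 \in sumset n A.
Proof.
elim: n => [|n IH] /=; first by rewrite inE.
by apply/imset2P; exists 0 0; rewrite ?addr0 // /A0 setU11.
Qed.

Lemma sumset_sub n (A : {set G}) : sumset n A \subset sumset n.+1 A.
Proof.
apply/subsetP => z zS; apply/imset2P; exists z 0; rewrite ?addr0 //.
by rewrite /A0 setU11.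
Qed.

Lemma sumset_grow n (A : {set G}) :
  sumset n A = setT \/ (n * (#|A0 A| - 1) + 1 <= #|sumset n A|)%N.
Proof.
elim: n => [|n IH]; first by right; rewrite mul0n cards1.
have ne1 : exists x, x \in sumset n A by exists 0; exact: sumset0.
have ne2 : exists x, x \in A0 A by exists 0; rewrite /A0 setU11.
have a1 : (0 < #|A0 A|)%N by apply/card_gt0P.
case: IH => [ST|H2].
  left; apply/eqP; rewrite eqEsubset subsetT /= -ST; exact: sumset_sub.
have [H1|H1] := CD (leqnn #|A0 A|) ne1 ne2; last by left.
right; rewrite mulSn -addnA.
move: H1 H2; rewrite /=.
set s := #|sumset n A|; set t := #|ss _ _|; set a := #|A0 A|.
rewrite /ss /= -/t.
move: a1; rewrite -/a => a1 H1 H2.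
have ea : a = (a - 1).+1 by rewrite subn1 prednK.
rewrite ea in H1; move: H1; rewrite addnS addn1 ltnS => H1.
apply: leq_trans H1; rewrite addnC leq_add2r; exact: H2.
Qed.
Lemma upper rho (A : {set G}) : (2 <= rho)%N -> diam_ge A rho ->
  (#|A| <= (p - 2) %/ (rho - 1) + 1)%N.
Proof.
move=> r1 dg; set q := (rho - 1)%N; set k := ((p - 2) %/ q)%N.
have q0 : (0 < q)%N by rewrite subn_gt0.
rewrite leqNgt; apply/negP => hA.
have hA0 : (#|A| <= #|A0 A|)%N by apply: subset_leq_card; apply: subsetUr.
have nT : sumset q A <> setT by apply: dg; rewrite /q ltn_subrL (ltnW r1).
have pr : sumset q A \proper setT by rewrite properT; apply/eqP.
have Sp := proper_card pr; rewrite cardG in Sp.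
case: (sumset_grow q A) => // H.
have c := ltn_ceil (p - 2) q0; rewrite -/k in c.
have h2 : ((k.+1) * q <= q * (#|A0 A| - 1))%N.
  rewrite mulnC leq_mul2l; apply/orP; right; rewrite leq_subRL; last by apply: leq_trans hA0; apply: leq_trans hA.
  by rewrite add1n -addn1; apply: leq_trans hA hA0.
move: c h2 H Sp. set X := (k.+1 * q)%N; set Y := (q * _)%N; set s := #|_|.
move=> /ltP h1 /leP h2 /leP h3 /ltP h4. rewrite -?minusE -?plusE in h1 h2 h3 h4. lia.
Qed.
Definition Bset (m : nat) : {set G} := [set x : G | ((x : nat) <= m)%N].

Lemma p1 : (1 < p)%N. Proof. exact: prime_gt1. Qed.

Lemma inordG (i : nat) : (i < p)%N -> nat_of_ord (inord i : G) = i.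
Proof. by move=> ip; rewrite inordK // Zp_cast // p1. Qed.

Lemma Bset_img m : (m < p)%N ->
  Bset m = [set (inord (val i) : G) | i : 'I_m.+1].
Proof.
move=> mp; apply/setP => x; rewrite inE; apply/idP/imsetP.
  move=> xm; exists (Ordinal (n:=m.+1) (m:=x) xm) => //.
  by apply/val_inj => /=; rewrite inordK.
move=> [i _ ->]; rewrite inordG; first by rewrite -ltnS; exact: ltn_ord.
exact: leq_trans (ltn_ord i) mp.
Qed.

Lemma Bset_card m : (m < p)%N -> #|Bset m| = m.+1.
Proof.
move=> mp; rewrite Bset_img // card_imset ?card_ord //.
move=> i j /(congr1 (@nat_of_ord _)); rewrite !inordG => [e||]; first exact: val_inj.
  exact: leq_trans (ltn_ord j) mp.
exact: leq_trans (ltn_ord i) mp.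
Qed.

Lemma Bset_card_le m : (#|Bset m| <= m.+1)%N.
Proof.
case: (ltnP m p) => mp; first by rewrite Bset_card.
apply: leq_trans (max_card _) _; rewrite card_ord Zp_cast ?p1 //.
exact: leqW.
Qed.

Lemma Bset_sumset n k : (n * k < p)%N -> sumset n (Bset k) \subset Bset (n * k).
Proof.
elim: n => [|n IH] h /=.
  by apply/subsetP => x; rewrite !inE => /eqP ->.
have h' : (n * k < p)%N by apply: leq_ltn_trans h; rewrite leq_mul2r leqnSn orbT.
apply/subsetP => z /imset2P [x y xS yA ->].
have := subsetP (IH h') x xS; rewrite !inE => xn.
have yk : ((y : nat) <= k)%N.
  move: yA; rewrite /A0 !inE => /orP [/eqP ->|] //.
rewrite valD modn_small; first by rewrite mulSn addnC leq_add.
by apply: leq_ltn_trans h; rewrite mulSn addnC leq_add.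
Qed.
Lemma val0 : nat_of_ord (0 : G) = 0%N. Proof. reflexivity. Qed.

Lemma setT_card_ne (S : {set G}) : (#|S| < p)%N -> S <> setT.
Proof. by move=> h ST; move: h; rewrite ST cardG ltnn. Qed.

Section Rho.
Variable rho : nat.
Hypothesis hrho : (2 <= rho <= p.-1)%N.
Let q := (rho - 1)%N.
Let k := ((p - 2) %/ q)%N.
Let A := Bset k.

Lemma q0 : (0 < q)%N.
Proof. by case/andP: hrho => h _; rewrite /q subn_gt0. Qed.
Lemma qp : (q <= p - 2)%N.
Proof. case/andP: hrho => h1 h2; rewrite /q leq_subLR.
move: h1 h2 p1 => /leP h1 /leP h2 /ltP h3; apply/leP; rewrite -?minusE -?plusE in h1 h2 h3 *.
rewrite -subn1 -?minusE in h2; lia. Qed.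
Lemma k1 : (1 <= k)%N.
Proof. by rewrite /k divn_gt0 ?q0 // qp. Qed.
Lemma kq : (k * q <= p - 2)%N.
Proof. exact: leq_trunc_div. Qed.
Lemma kp : (k.+1 < p)%N.
Proof.
have := leq_trans (leq_pmulr k q0) kq => h.
move: h p1 => /leP h /ltP h3; apply/ltP; rewrite -?minusE in h; lia.
Qed.

Lemma A0A : A0 A = A.
Proof. apply/setP => x; rewrite /A0 !inE; case: eqP => // ->; by rewrite orTb val0. Qed.

Lemma cardA : #|A| = k.+1.
Proof. by rewrite Bset_card // ltnW // kp. Qed.

Lemma A_diam_ge : diam_ge A rho.
Proof.
move=> n nr; apply: setT_card_ne.
have nk : (n * k <= p - 2)%N.
  apply: leq_trans kq; rewrite mulnC leq_mul2l; apply/orP; right.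
  by rewrite /q leq_subRL ?add1n // (leq_trans _ nr).
have nkp : (n * k < p)%N.
  move: nk p1 => /leP h /ltP h3; apply/ltP; rewrite -?minusE in h; lia.
apply: leq_ltn_trans (subset_leq_card (Bset_sumset nkp)) _.
apply: leq_ltn_trans (Bset_card_le _) _.
move: nk p1 => /leP h /ltP h3; apply/ltP; rewrite -?minusE in h; lia.
Qed.

Lemma A_diam_finite : diam_finite A.
Proof.
exists p; case: (sumset_grow p A) => // H; exfalso.
move: H; rewrite A0A cardA subn1 /= => H.
have := leq_trans H (max_card _); rewrite card_ord Zp_cast ?p1 //.
have := k1; move=> /leP h1 h2; move/leP: h2; rewrite -?plusE -?multE => h2.
have : (p <= p * k)%N by apply: leq_pmulr; exact: k1.
move=> /leP; rewrite -?multE; lia.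
Qed.

Lemma A_gen : generates A.
Proof.
move=> H H0 Hsub AH.
pose d : G := inord 1.
have vd : nat_of_ord d = 1%N by rewrite inordG // p1.
have d0 : d != 0 by apply/eqP => /(congr1 (@nat_of_ord _)); rewrite vd.
have dH : d \in H by apply: (subsetP AH); rewrite inE vd k1.
have mdH : 0 - d \in H by apply: Hsub.
apply: (closed_full H0 d0) => x xH.
by have := Hsub _ _ xH mdH; rewrite sub0r opprK.
Qed.

Lemma A_aper : aperiodic A.
Proof.
apply/setP => z; rewrite !inE; apply/idP/idP.
  move=> /eqP e; apply/negPn/negP => z0.
  have zA : 0 \in A by rewrite -A0A /A0 setU11.
  have cl : forall x, x \in A -> x + z \in A.
    by move=> x xA; rewrite -e; apply: imset_f.
  have AT := closed_full zA z0 cl.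
  have := cardA; rewrite AT cardG => e2.
  by have := kp; rewrite -e2 ltnn.
move=> /eqP ->; apply/eqP/setP => x; apply/imsetP/idP.
  by move=> [y yA ->]; rewrite addr0.
by move=> xA; exists x; rewrite ?addr0.
Qed.

Lemma A_max : rho_maximal rho A.
Proof.
split; first exact: A_diam_ge.
move=> B AB dB; apply/eqP; rewrite eq_sym eqEcard AB /= cardA.
by have := upper (proj1 (andP hrho)) dB; rewrite addn1.
Qed.

Lemma main_t : t_rho_is G rho ((p - 2) %/ (rho - 1) + 1).
Proof.
split.
  left; exists A; split; last by rewrite cardA addn1.
  by split; [exact: A_aper | split; [exact: A_max | exact: A_gen]].
by move=> B [_ [[dB _] _]]; apply: upper (proj1 (andP hrho)) dB.
Qed.

Lemma main_s : s_rho_is G rho ((p - 2) %/ (rho - 1) + 1).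
Proof.
split.
  left; exists A; split; last by rewrite cardA addn1.
  by split; [exact: A_diam_ge | exact: A_diam_finite].
by move=> B [dB _]; apply: upper (proj1 (andP hrho)) dB.
Qed.
End Rho.
End S.

Local Close Scope ring_scope.

Theorem corollary2p6 (p rho : nat) (hp : prime p) (hrho : (2 <= rho <= p.-1)%N) :
  t_rho_is (Zp_finZmod p) rho ((p - 2) %/ (rho - 1) + 1) /\
  s_rho_is (Zp_finZmod p) rho ((p - 2) %/ (rho - 1) + 1).
Proof. split; [exact: main_t | exact: main_s]. Qed.
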